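(* Let $r,i\in\mathbb{Z}$ and $\beta\in\Bbbk^*$ with $\beta^n\ne1$. Then $c_\beta^{r,i}(k,0)\ne0$ for all $0\le k\le n$, and $c_\beta^{r,i}(n,l)=0$ for all $1\le l\le n-1$. (Equivalently: in the lower triangular matrix $\mathcal{A}_\beta^{r,i}(n)=(c_\beta^{r,i}(k,l))_{0\le l\le k\le n}$, all first-column entries are nonzero and the last row is zero except for its first and last entries.)
   Context: $\Bbbk$ is an algebraically closed field of characteristic $0$; $n,w$ positive integers, $\gamma$ a primitive $n$-th root of unity. $H=B(n,w,\gamma)$ is the Hopf algebra generated by $x^{\pm1},g,y$ with relations $xx^{-1}=x^{-1}x=1$, $xg=gx$, $xy=yx$, $yg=\gamma gy$, $y^n=1-x^w=1-g^n$, with $\Delta(y)=y\otimes g+1\otimes y$, $x,g$ group-like, $S(x)=x^{-1}$, $S(g)=g^{-1}$, $S(y)=-yg^{-1}$. The elements $c_\beta^{r,i}(k,l)\in H$ ($0\le l\le k$) are defined by $c_\beta^{r,i}(0,0)=x^rg^i$ and, for $k\ge0$: $c_\beta^{r,i}(k+1,0)=c_\beta^{r,i}(k,0)S(y)+\beta yc_\beta^{r,i}(k,0)S(g)$; for $0<l<k+1$, $c_\beta^{r,i}(k+1,l)=c_\beta^{r,i}(k,l)S(y)+\beta\gamma^{-l}yc_\beta^{r,i}(k,l)S(g)+c_\beta^{r,i}(k,l-1)S(g)$; $c_\beta^{r,i}(k+1,k+1)=c_\beta^{r,i}(k,k)S(g)$. *)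

(* Defs.v *)
From HB Require Import structures.
From mathcomp Require Import all_boot all_order all_algebra.
Set Implicit Arguments. Unset Strict Implicit. Unset Printing Implicit Defensive.
Import Order.TTheory GRing.Theory Num.Theory.
Local Open Scope ring_scope.

Definition B_rels (k : fieldType) (n w : nat) (gam : k) (A : algType k)
    (x xi g y : A) : Prop :=
  x * xi = 1 /\ xi * x = 1 /\ x * g = g * x /\ x * y = y * x /\
  y * g = gam *: (g * y) /\
  y ^+ n = 1 - x ^+ w /\ 1 - x ^+ w = 1 - g ^+ n.

Definition is_B_presentation (k : fieldType) (n w : nat) (gam : k)
    (A : algType k) (x xi g y : A) : Prop :=
  B_rels n w gam x xi g y /\
  forall (B : algType k) (x' xi' g' y' : B),
    B_rels n w gam x' xi' g' y' ->
    (exists f : {lrmorphism A -> B},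
        [/\ f x = x', f xi = xi', f g = g' & f y = y']) /\
    (forall f1 f2 : {lrmorphism A -> B},
        f1 x = f2 x -> f1 xi = f2 xi -> f1 g = f2 g -> f1 y = f2 y ->
        f1 =1 f2).

(* Antipode values on generators: S(y) = - y g^{-1}, S(g) = g^{-1}. *)
Definition S_y (k : fieldType) (A : unitAlgType k) (g y : A) : A := - (y * g^-1).
Definition S_g (k : fieldType) (A : unitAlgType k) (g : A) : A := g^-1.

(* c_beta^{r,i}(k,l); the value is set to 0 outside the range 0 <= l <= k. *)
Fixpoint cb (k : fieldType) (gam : k) (A : unitAlgType k) (x g y : A)
    (r i : int) (beta : k) (kk : nat) (l : nat) {struct kk} : A :=
  match kk with
  | 0%N => if l == 0%N then x ^ r * g ^ i else 0
  | kk'.+1 =>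
      let c := cb gam x g y r i beta kk' in
      if l == 0%N then
        c 0%N * S_y g y + beta *: (y * c 0%N * S_g g)
      else if (l < kk'.+1)%N then
        c l * S_y g y + (beta * gam ^- l) *: (y * c l * S_g g)
          + c l.-1 * S_g g
      else if l == kk'.+1 then c kk' * S_g g
      else 0
  end.

(* Main.v *)
Require Import Defs.
From HB Require Import structures.
From mathcomp Require Import all_boot all_order all_algebra.
From mathcomp Require Import all_fingroup.
From mathcomp Require Import ring.
Import Order.TTheory GRing.Theory Num.Theory.
Local Open Scope ring_scope.
Section Scal.
Variables (K : fieldType) (gam b : K).
Hypothesis gam0 : gam != 0.

Fixpoint acoef (k l : nat) : K :=
  match k with
  | 0%N => (l == 0%N)%:R
  | k'.+1 =>
    if l == 0%N then (b - gam ^+ k') * acoef k' 0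
    else if (l < k'.+1)%N then (b * gam ^- l - gam ^+ k') * acoef k' l + acoef k' l.-1
    else if l == k'.+1 then acoef k' k' else 0
  end.

Definition Ff l := \prod_(j < l) (1 - gam ^- j.+1).
Definition Rf k l := \prod_(j < l) (1 - gam ^- (k - j)).
Definition Pf l k := \prod_(l <= t < k) (b - gam ^+ t).

Lemma Rf_big k l : (k < l)%N -> Rf k l = 0.
Proof.
move=> kl; apply/eqP/prodf_eq0; exists (Ordinal kl) => //=.
by rewrite subnn expr0 invr1 subrr.
Qed.

Lemma RfS k l : Rf k.+1 l.+1 = (1 - gam ^- k.+1) * Rf k l.
Proof. by rewrite /Rf big_ord_recl /= subn0; congr (_ * _); apply: eq_bigr => j _; rewrite subSS. Qed.

Lemma aform k l : acoef k l * Ff l = Rf k l * Pf l k.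
Proof.
elim: k l => [|k IH] l.
  case: l => [|l]; first by rewrite /= /Ff /Rf /Pf !big_ord0 big_geq // !mul1r.
  by rewrite Rf_big // mul0r /= mul0r.
rewrite /=; case: l => [|l] /=.
  rewrite /Ff /Rf /Pf !big_ord0 mul1r mulr1 big_nat_recr //=.
  by have := IH 0%N; rewrite /Ff /Rf /Pf !big_ord0 mul1r mulr1 => ->; rewrite mulrC.
case: ltnP => lk.
  have IH1 := IH l.+1; have IH2 := IH l.
  have FS : Ff l.+1 = Ff l * (1 - gam ^- l.+1) by rewrite /Ff big_ord_recr.
  have RS : Rf k l.+1 = Rf k l * (1 - gam ^- (k - l)) by rewrite /Rf big_ord_recr.
  have PS : Pf l k = (b - gam ^+ l) * Pf l.+1 k by rewrite /Pf big_ltn.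
  have PS2 : Pf l.+1 k.+1 = Pf l.+1 k * (b - gam ^+ k) by rewrite /Pf big_nat_recr.
  rewrite RfS PS2.
  have -> : ((b * gam ^- l.+1 - gam ^+ k) * acoef k l.+1 + acoef k l) * Ff l.+1 =
     (b * gam ^- l.+1 - gam ^+ k) * (acoef k l.+1 * Ff l.+1) + (1 - gam ^- l.+1) * (acoef k l * Ff l).
    by rewrite FS; ring.
  rewrite IH1 IH2 RS PS.
  have [m ->] : exists m, k = (l + m)%N by exists (k - l)%N; rewrite subnKC // ltnW.
  rewrite addKn.
  have G1 : gam ^+ l != 0 by rewrite expf_neq0.
  have G2 : gam ^+ m != 0 by rewrite expf_neq0.
  rewrite -?addSn !exprS !exprD ?exprS.
  by field; rewrite G1 G2 gam0.
have [<-|ne] := eqVneq k l; last first.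
  rewrite eqSS (negbTE (_ : l != k)); last by rewrite eq_sym.
  by rewrite Rf_big ?mul0r //; rewrite ltnS ltn_neqAle ne -ltnS.
rewrite eqSS eqxx.
rewrite /Pf !big_geq // !mulr1 RfS /Ff big_ord_recr /=.
have := IH k; rewrite /Pf big_geq // mulr1 /Ff => <-; ring.
Qed.
End Scal.
Section Alg.
Variables (K : fieldType) (gam : K) (A : unitAlgType K) (x g y : A).
Hypotheses (gam0 : gam != 0) (xU : x \is a GRing.unit) (gU : g \is a GRing.unit)
  (xy : x * y = y * x) (yg : y * g = gam *: (g * y)).
Variables (r i : int) (beta : K).

Local Notation G := (g^-1).
Lemma sAr (c : K) (a b : A) : a * (c *: b) = c *: (a * b).
Proof. by rewrite scalerAr. Qed.
Lemma sAl (c : K) (a b : A) : (c *: a) * b = c *: (a * b).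
Proof. by rewrite scalerAl. Qed.
Local Notation s := (gam ^ i).
Local Notation u := (x ^ r * g ^ i).

Lemma Gy : G * y = gam *: (y * G).
Proof.
rewrite -[G * y](mulrK gU) -(mulrA _ y) yg -scalerAr -scalerAl.
by rewrite mulKr.
Qed.

Lemma ygn m : y * g ^+ m = gam ^+ m *: (g ^+ m * y).
Proof.
elim: m => [|m IH]; first by rewrite !expr0 mulr1 mul1r scale1r.
by rewrite exprSr mulrA IH sAl -mulrA yg sAr scalerA mulrA -exprSr.
Qed.

Lemma yG : y * G = gam^-1 *: (G * y).
Proof. by rewrite Gy scalerA mulVf // scale1r. Qed.

Lemma yGn m : y * G ^+ m = gam^-1 ^+ m *: (G ^+ m * y).
Proof.
elim: m => [|m IH]; first by rewrite !expr0 mulr1 mul1r scale1r.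
by rewrite exprSr mulrA IH sAl -(mulrA _ y) yG sAr scalerA mulrA -exprSr -exprSr.
Qed.

Lemma Gny m : G ^+ m * y = gam ^+ m *: (y * G ^+ m).
Proof.
elim: m => [|m IH]; first by rewrite !expr0 mulr1 mul1r scale1r.
by rewrite exprS -mulrA IH sAr mulrA Gy sAl scalerA -mulrA -exprSr -exprS.
Qed.

Lemma ygi : y * g ^ i = s *: (g ^ i * y).
Proof.
case: i => m; first by rewrite -!exprnP ygn.
by rewrite !NegzE -!exprnN -!exprVn yGn exprVn.
Qed.

Lemma yu : y * u = s *: (u * y).
Proof.
have cxy : GRing.comm y (x ^ r) by apply: commrXz; rewrite /GRing.comm xy.
by rewrite mulrA cxy -mulrA ygi sAr mulrA.
Qed.

Definition E m k := u * y ^+ m * G ^+ k.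

Lemma HE1 m k : E m k * S_y g y = - (gam ^+ k *: E m.+1 k.+1).
Proof.
rewrite /S_y /E mulrN; congr (- _).
rewrite !mulrA -(mulrA _ (G ^+ k)) Gny sAr sAl; congr (_ *: _).
by rewrite !mulrA -(mulrA u (y ^+ m)) -exprSr -(mulrA _ (G ^+ k)) -exprSr.
Qed.

Lemma HE2 m k : y * E m k * S_g g = s *: E m.+1 k.+1.
Proof.
rewrite /S_g /E 2!(mulrA y) yu !sAl; congr (_ *: _).
by rewrite -(mulrA u y) -exprS -(mulrA _ (G ^+ k)) -exprSr.
Qed.

Lemma HE3 m k : E m k * S_g g = E m k.+1.
Proof. by rewrite /S_g /E -mulrA -exprSr. Qed.


Lemma cbE kk l : cb gam x g y r i beta kk l =
  if (l <= kk)%N then @acoef K gam (beta * s) kk l *: E (kk - l) kk else 0.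
Proof.
elim: kk l => [|kk IH] l.
  case: l => [|l] //=.
  by rewrite /E !expr0 !mulr1 scale1r.
rewrite /=.
case: l => [|l] /=.
  rewrite IH /= !subn0 sAl HE1 sAr sAl HE2 !scalerA scalerN scalerA -scaleNr -scalerDl.
  by congr (_ *: _); ring.
rewrite ltnS.
case: ltngtP => lk.
- rewrite !IH lk (ltnW lk) !sAl HE1 sAr sAl HE2 HE3 subnSK // subSS.
  rewrite scalerN !scalerA -scaleNr -!scalerDl.
  by rewrite ltnS (ltnW lk); congr (_ *: _); ring.
- by rewrite ltnS leqNgt lk /= eqSS gtn_eqF.
- by rewrite lk eqxx IH leqnn subnn ltnS leqnn sAl HE3 subSS subnn.
Qed.
End Alg.
Section Model.
Variables (k : closedFieldType) (n' w : nat) (gam : k).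
Hypothesis hchar : [pchar k] =i pred0.
Hypothesis hgam : n'.+1.-primitive_root gam.
Local Notation N := n'.+1.

Definition sP : 'S_N := perm (@ordS_inj N).
Definition Pm : 'M[k]_N := perm_mx sP.
Definition Dm : 'M[k]_N := diag_mx (\row_j gam ^+ j).

Lemma sP_iter m (j : 'I_N) : val (iter m (@ordS N) j) = ((j + m) %% N)%N.
Proof.
elim: m => [|m IH] /=; first by rewrite addn0 modn_small.
by rewrite IH addnS -[((j + m) %% N).+1]addn1 modnDml addn1.
Qed.

Lemma sPn : (sP ^+ N)%g = 1%g.
Proof.
apply/permP => j; rewrite perm.permX perm.perm1; apply: val_inj.
have -> : iter N sP j = iter N (@ordS N) j.
  by apply: eq_iter => z; rewrite /sP perm.permE.
by rewrite sP_iter modnDr modn_small.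
Qed.

Lemma PmX m : Pm ^+ m = perm_mx (sP ^+ m)%g.
Proof.
elim: m => [|m IH]; first by rewrite expr0 expg0 perm_mx1.
by rewrite exprSr IH expgSr perm_mxM mulmxE.
Qed.

Lemma PmN : Pm ^+ N = 1.
Proof. by rewrite PmX sPn perm_mx1. Qed.

Lemma DmX m : Dm ^+ m = diag_mx (\row_j (gam ^+ j) ^+ m).
Proof.
elim: m => [|m IH].
  rewrite expr0; apply/matrixP => a b; rewrite !mxE expr0.
  by case: eqP.
rewrite exprSr IH -mulmxE mulmx_diag; congr diag_mx; apply/matrixP => a b.
by rewrite !mxE exprSr.
Qed.

Lemma DmN : Dm ^+ N = 1.
Proof.
rewrite DmX; apply/matrixP => a b; rewrite !mxE exprAC (prim_expr_order hgam) expr1n.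
by case: eqP.
Qed.

Lemma PD : Pm * Dm = gam *: (Dm * Pm).
Proof.
rewrite -!mulmxE mul_mx_diag mul_diag_mx; apply/matrixP => a b.
rewrite !mxE /Pm /perm_mx /row_perm ?mxE.
case: eqP => [<-|_]; last by rewrite mul0r mulr0 mulr0.
rewrite /sP perm.permE /= (prim_expr_mod hgam) exprS; ring.
Qed.
End Model.

Section Model2.
Variables (k : closedFieldType) (n' w : nat) (gam : k).
Hypothesis hchar : [pchar k] =i pred0.
Hypothesis hgam : n'.+1.-primitive_root gam.
Hypothesis hw : (0 < w)%N.
Local Notation N := n'.+1.

Lemma model_ex : exists (x' xi' g' y' : 'M[k]_N),
  B_rels N w gam x' xi' g' y' /\ 1 - x' ^+ w != 0.
Proof.
have ch := (pcharf0P k).1 hchar.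
have two0 : (2 : k) != 0 by rewrite ch.
set nu : k := 2 ^+ N; set lam : k := 2 ^+ w.
have nu0 : nu != 0 by rewrite expf_neq0.
have c0 : 1 - nu ^+ w != 0.
  rewrite /nu -exprM -natrX.
  have h1 : (1 < 2 ^ (N * w))%N.
    by rewrite -{1}(expn0 2) ltn_exp2l // muln_gt0 hw.
  have [m ->] : exists m, (2 ^ (N * w) = m.+2)%N by move: h1; case: (2 ^ (N * w))%N => [|[|m]] // _; exists m.
  by rewrite mulrS opprD addrA subrr add0r oppr_eq0 ch.
have [mu hmu] : exists mu : k, mu ^+ N = 1 - nu ^+ w.
  have [z hz] := @solve_monicpoly k N (fun j => if j == 0%N then 1 - nu ^+ w else 0) (ltn0Sn _).
  exists z; rewrite hz big_ord_recl /= expr0 mulr1 big1 ?addr0 // => j _.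
  by rewrite mul0r.
have sX (a : k) m : (a%:M : 'M[k]_N) ^+ m = (a ^+ m)%:M.
  elim: m => [|m IH]; first by rewrite !expr0.
  by rewrite !exprSr IH -mulmxE -scalar_mxM.
have one1 : (1 : 'M[k]_N) = 1%:M by [].
exists nu%:M, nu^-1%:M, (lam *: Dm k n' gam), (mu *: Pm k n').
split; last first.
  rewrite sX one1 -raddfB; apply: contra c0 => /eqP/matrixP/(_ 0 0).
  by rewrite !mxE eqxx mulr1n => ->.
split; first by rewrite -mulmxE -scalar_mxM mulfV.
split; first by rewrite -mulmxE -scalar_mxM mulVf.
split; first by rewrite -!mulmxE scalar_mxC.
split; first by rewrite -!mulmxE scalar_mxC.
split.
  by rewrite -!scalerAl -!scalerAr PD // !(scalerA (R:=k)); congr (_ *: _); ring.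
split.
  by rewrite exprZn PmN hmu sX one1 scalemx1 raddfB.
rewrite exprZn DmN //; congr (_ - _); rewrite (sX nu w) one1 scalemx1 /lam /nu -!exprM mulnC.
by [].
Qed.
End Model2.

Arguments acoef {K}.
Arguments Ff {K}.
Arguments Rf {K}.
Arguments Pf {K}.
Arguments aform {K gam} b.
Arguments E {K A}.

Theorem lemma3p14 (k : closedFieldType) (hchar : [pchar k] =i pred0)
  (n w : nat) (hn : (0 < n)%N) (hw : (0 < w)%N)
  (gam : k) (hgam : n.-primitive_root gam)
  (A : unitAlgType k) (x g y : A)
  (hA : is_B_presentation n w gam x x^-1 g y)
  (r i : int) (beta : k) (hb : beta != 0) (hbn : beta ^+ n != 1) :
  (forall kk : nat, (kk <= n)%N -> cb gam x g y r i beta kk 0 != 0) /\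
  (forall l : nat, (1 <= l <= n.-1)%N -> cb gam x g y r i beta n l = 0).
Proof.
move: hA => [[hxx [hxx' [hxg [hxy [hyg [hyn hxg']]]]]] univ].
case: n hn hgam hbn hyn hxg' univ => [//|n'] _ hgam hbn hyn hxg' univ.
have xU : x \is a GRing.unit by apply/unitrP; exists x^-1.
have gam0 : gam != 0.
  apply/eqP => e; move: (prim_expr_order hgam); rewrite e expr0n /=.
  by move/eqP; rewrite eq_sym oner_eq0.
have gU : g \is a GRing.unit.
  have gN : x ^+ w = g ^+ n'.+1 by apply: (subrI 1).
  by rewrite -(unitrX_pos g (ltn0Sn n')) -gN unitrX.
have cnz : 1 - x ^+ w != 0.
  have [x' [xi' [g' [y' [rels nz]]]]] := @model_ex k n' w gam hchar hgam hw.
  have [[f [fx fxi fg fy]] _] := univ _ _ _ _ _ rels.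
  apply: contra nz => /eqP h.
  by rewrite -fx -rmorphXn -(rmorph1 f) -raddfB h raddf0.
set s := gam ^ i.
have sN : s ^+ n'.+1 = 1.
  by rewrite /s exprnP exprzAC -exprnP (prim_expr_order hgam) exp1rz.
set b := beta * s.
split.
  move=> kk kkn.
  rewrite cbE // subn0 scaler_eq0 negb_or; apply/andP; split.
    have := aform b gam0 kk 0; rewrite /Ff /Rf !big_ord0 mulr1 mul1r => ->.
    rewrite /Pf prodf_seq_neq0; apply/allP => t _ /=.
    rewrite subr_eq0; apply/eqP => e.
    move: hbn; rewrite (_ : beta ^+ n'.+1 = b ^+ n'.+1); last by rewrite /b exprMn sN mulr1.
    by rewrite e exprAC (prim_expr_order hgam) expr1n eqxx.
  apply/negP => /eqP hE.
  have uU : x ^ r * g ^ i \is a GRing.unit by rewrite unitrMl ?unitrXz.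
  have hy : y ^+ kk = 0.
    have -> : y ^+ kk = (x ^ r * g ^ i)^-1 * E x g y r i kk kk * g ^+ kk.
      by rewrite /E -(mulrA (x ^ r * g ^ i)) mulKr // -mulrA exprVn mulVr ?mulr1 // unitrX.
    by rewrite hE mulr0 mul0r.
  move: cnz; rewrite -hyn -(subnKC kkn) exprD hy mul0r eqxx //.
move=> l /andP [l1 ln].
have lN : (l <= n'.+1)%N by apply: (leq_trans ln); rewrite /= leqnSn.
rewrite cbE // lN.
have -> : acoef gam b n'.+1 l = 0; last by rewrite scale0r.
have := aform b gam0 n'.+1 l.
rewrite (_ : Rf gam n'.+1 l = 0) ?mul0r; last first.
  apply/eqP/prodf_eq0; exists (Ordinal l1) => //=.
  by rewrite subn0 (prim_expr_order hgam) invr1 subrr.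
move/eqP; rewrite mulf_eq0 => /orP [/eqP //|].
rewrite /Ff => /prodf_eq0 [j _]; rewrite subr_eq0 eq_sym invr_eq1 -(prim_order_dvd hgam).
move=> /dvdn_leq => /(_ (ltn0Sn _)); rewrite ltnS => h.
have : (j < n')%N by apply: (leq_trans _ ln); exact: ltn_ord.
by rewrite ltnNge h.
Qed.
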